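(* Let $P \subset \mathbb{R}^2$ be a finite point set satisfying the standing condition, $\varepsilon \in (0,1)$, and let $S$ and the directed graph $G$ be as defined in the context. Then: (i) if $C$ is a directed cycle of $G$, then the set $Q$ of vertices of $C$ is an $\varepsilon$-regret set of $P$; (ii) if $Q$ is a locally minimal $\varepsilon$-regret set of $P$, then there exists a directed cycle $C$ of $G$ whose vertex set is $Q$.
   Context: For finite $Q \subset \mathbb{R}^2$ and unit $x$, $\omega(x,Q)=\max_{p\in Q}\langle p,x\rangle$. Standing condition: $\omega(x,P)>0$ for all $x\in\mathbb{S}^1$. Regret ratio $l_x(Q) = 1-\omega(x,Q)/\omega(x,P)$, maximum regret ratio $l(Q)=\max_{x\in\mathbb{S}^1} l_x(Q)$; $Q\subseteq P$ is an $\varepsilon$-regret set if $l(Q)\le\varepsilon$. $Q$ is a locally minimal $\varepsilon$-regret set if it is an $\varepsilon$-regret set and $Q\setminus\{q\}$ is not an $\varepsilon$-regret set for any $q \in Q$. The Voronoi cell of $p$ is $R(p)=\{x\neq 0 : \langle p,x\rangle\ge\omega(x,P)\}$; the extreme points $X=\{t_1,\dots,t_m\}$ are the points with $R(p)\neq\varnothing$ (the convex hull vertices), indexed counterclockwise by polar angle, cyclically. For each $i$, $x^*_i\in\mathbb{S}^1$ is the unit vector with $\langle t_i,x\rangle=\langle t_{i+1},x\rangle$ and $\langle t_i,x\rangle>0$. Candidate set: $S = X\cup\{p\in P\setminus X : \exists i,\ \langle p,x^*_i\rangle\ge(1-\varepsilon)\langle t_i,x^*_i\rangle\}$, indexed $s_1,\dots,s_{|S|}$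 counterclockwise by polar angle. For points $a,b$, $X[a,b]$ denotes the extreme points whose polar angles lie in the counterclockwise angular range from the angle of $a$ to the angle of $b$ (inclusive, wrapping through $2\pi$ if needed). The directed graph $G$ has vertex set $S$, and for $i\neq j$ there is an edge $s_i\to s_j$ iff the counterclockwise angle from $s_i$ to $s_j$ is less than $\pi$ and $l_{ij}\le\varepsilon$, where $l_{ij}=\max_{t\in X[s_i,s_j]}\bigl(1-\langle s_i,x^*\rangle/\langle t,x^*\rangle\bigr)$ (taken as $0$ if $X[s_i,s_j]$ is empty) and $x^*\in\mathbb{S}^1$ is the unit vector with $\langle s_i,x^*\rangle=\langle s_j,x^*\rangle$ and $\langle s_i,x^*\rangle\ge 0$. *)

(* Defs.v *)
From mathcomp Require Import all_boot all_order all_algebra.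
From mathcomp Require Import all_classical all_reals all_analysis.
Set Implicit Arguments. Unset Strict Implicit. Unset Printing Implicit Defensive.
Import Order.TTheory GRing.Theory Num.Theory.
Local Open Scope ring_scope.

Section Defs.
Variable R : realType.
Local Notation pt := (R * R)%type.

Definition dot (p x : pt) : R := p.1 * x.1 + p.2 * x.2.
Definition vnorm (p : pt) : R := Num.sqrt (p.1 ^+ 2 + p.2 ^+ 2).
Definition unitv (x : pt) : Prop := x.1 ^+ 2 + x.2 ^+ 2 = 1.

(* maximum of a finite sequence of reals (0 for the empty sequence) *)
Definition maxseq (s : seq R) : R := foldr Num.max (head 0 s) s.

Definition omega (x : pt) (Q : seq pt) : R := maxseq [seq dot q x | q <- Q].

Definition standing (P : seq pt) : Prop :=
  forall x, unitv x -> 0 < omega x P.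

Definition regret_x (P Q : seq pt) (x : pt) : R := 1 - omega x Q / omega x P.

Definition regret_set (P Q : seq pt) (eps : R) : Prop :=
  {subset Q <= P} /\ forall x, unitv x -> regret_x P Q x <= eps.

Definition locally_minimal (P Q : seq pt) (eps : R) : Prop :=
  regret_set P Q eps /\
  forall q, q \in Q -> ~ regret_set P [seq p <- Q | p != q] eps.

Definition voronoi (P : seq pt) (p x : pt) : Prop :=
  x != 0 /\ omega x P <= dot p x.
Definition extreme (P : seq pt) (p : pt) : Prop :=
  p \in P /\ exists x, voronoi P p x.

Definition polar_angle (p : pt) : R :=
  if 0 <= p.2 then acos (p.1 / vnorm p) else 2 * pi - acos (p.1 / vnorm p).

Definition ccw_angle (a b : pt) : R :=
  let d := polar_angle b - polar_angle a in
  if 0 <= d then d else d + 2 * pi.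

(* t' = t_{i+1} is the counterclockwise successor of t = t_i among the
   extreme points (cyclically) *)
Definition consecutive (P : seq pt) (t t' : pt) : Prop :=
  [/\ extreme P t, extreme P t', t != t' &
      forall u, extreme P u -> u != t -> ccw_angle t t' <= ccw_angle t u].

Definition xstar (t t' x : pt) : Prop :=
  [/\ unitv x, dot t x = dot t' x & 0 < dot t x].

Definition candidate (P : seq pt) (eps : R) (p : pt) : Prop :=
  p \in P /\
  (extreme P p \/
   exists t t' x, [/\ consecutive P t t', xstar t t' x &
                      (1 - eps) * dot t x <= dot p x]).

Definition in_range (P : seq pt) (a b t : pt) : Prop :=
  extreme P t /\ ccw_angle a t <= ccw_angle a b.

Definition lij (P : seq pt) (a b x : pt) : R :=
  maxseq [seq 1 - dot a x / dot t x | t <- [seq t <- undup P | `[< in_range P a b t >]]].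

Definition edge (P : seq pt) (eps : R) (a b : pt) : Prop :=
  [/\ candidate P eps a, candidate P eps b, a != b,
      ccw_angle a b < pi &
      exists x, [/\ unitv x, dot a x = dot b x, 0 <= dot a x &
                    lij P a b x <= eps]].

Definition dcycle (P : seq pt) (eps : R) (c : seq pt) : Prop :=
  [/\ c != [::], uniq c &
      forall i, (i < size c)%N ->
        edge P eps (nth 0 c i) (nth 0 c ((i.+1) %% size c))].

(* distinct points of S have distinct polar angles (implicit in indexing S
   counterclockwise by polar angle) *)
Definition distinct_angles (P : seq pt) (eps : R) : Prop :=
  forall p q, candidate P eps p -> candidate P eps q -> p != q ->
    polar_angle p != polar_angle q.

End Defs.

(* Main.v *)
Require Import Defs.
From mathcomp Require Import all_boot all_order all_algebra.
From mathcomp Require Import all_classical all_reals all_analysis.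
From mathcomp Require Import ring lra.
Import Order.TTheory GRing.Theory Num.Theory.
Local Open Scope ring_scope.
Set Implicit Arguments. Unset Strict Implicit. Unset Printing Implicit Defensive.

Section Aux.
Variable R : realType.
Local Notation pt := (R * R)%type.

Definition cross (a b : pt) : R := a.1 * b.2 - a.2 * b.1.
Definition nrm2 (p : pt) : R := p.1 ^+ 2 + p.2 ^+ 2.

Lemma nrm2_ge0 p : 0 <= nrm2 p.
Proof. rewrite /nrm2; nra. Qed.

Lemma nrm2_eq0 p : nrm2 p = 0 -> p.1 = 0 /\ p.2 = 0.
Proof. rewrite /nrm2 => h; split; nra. Qed.

Lemma nz_of_dot t x : dot t x != 0 -> 0 < nrm2 t.
Proof.
move=> h; rewrite lt_neqAle nrm2_ge0 andbT; apply/eqP => /esym /nrm2_eq0 [h1 h2].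
by move: h; rewrite /dot h1 h2 !mul0r addr0 eqxx.
Qed.

Lemma nz_neq0 (x : pt) : 0 < nrm2 x -> x != 0.
Proof. move=> h; apply/eqP => e; move: h; rewrite e /nrm2 /=; lra. Qed.

Lemma neq0_nz (x : pt) : x != 0 -> 0 < nrm2 x.
Proof.
move=> h; rewrite lt_neqAle nrm2_ge0 andbT; apply/eqP => /esym /nrm2_eq0 [h1 h2].
by move: h; case: x h1 h2 => /= a b -> ->; rewrite eqxx.
Qed.

Lemma foldr_max_ge d (s : seq R) : d <= foldr Num.max d s /\ forall x, x \in s -> x <= foldr Num.max d s.
Proof.
elim: s => [|y s [IH1 IH2]] /=; first by split => // x; rewrite in_nil.
split; first by rewrite le_max IH1 orbT.
move=> x; rewrite in_cons => /orP [/eqP ->|xs]; first by rewrite le_max lexx.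
by rewrite le_max IH2 // orbT.
Qed.

Lemma foldr_max_mem d (s : seq R) : foldr Num.max d s = d \/ foldr Num.max d s \in s.
Proof.
elim: s => [|y s IH] /=; first by left.
rewrite /Order.max; case: ifP => _; last by right; rewrite mem_head.
by case: IH => [->|h]; [left | right; rewrite in_cons h orbT].
Qed.

Lemma maxseq_ge (s : seq R) x : x \in s -> x <= maxseq s.
Proof. by move=> h; have [_ ] := foldr_max_ge (head 0 s) s; apply. Qed.

Lemma maxseq_mem (s : seq R) : s != [::] -> maxseq s \in s.
Proof.
case: s => // y s _; rewrite /maxseq.
by case: (foldr_max_mem (head 0 (y :: s)) (y :: s)) => [->|//]; rewrite mem_head.
Qed.

Lemma maxseq_le (s : seq R) e : (forall x, x \in s -> x <= e) -> 0 <= e -> maxseq s <= e.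
Proof.
move=> h e0; case: s h => [|y s] h; first by rewrite /maxseq.
by apply: h; apply: maxseq_mem.
Qed.

Lemma omega_ge x (Q : seq pt) p : p \in Q -> dot p x <= omega x Q.
Proof. by move=> h; apply: maxseq_ge; apply: map_f. Qed.

Lemma omega_mem x (Q : seq pt) : Q != [::] -> exists2 p, p \in Q & omega x Q = dot p x.
Proof.
move=> h; have : omega x Q \in [seq dot q x | q <- Q].
  by apply: maxseq_mem; case: Q h.
by case/mapP => p pQ ->; exists p.
Qed.

Lemma omega_nil (x : pt) : omega x [::] = 0.
Proof. by []. Qed.

Definition scl (k : R) (x : pt) : pt := (k * x.1, k * x.2).

Lemma dot_scl p k x : dot p (scl k x) = k * dot p x.
Proof. rewrite /dot /=; ring. Qed.

Lemma omega_scl k x (Q : seq pt) : 0 < k -> omega (scl k x) Q = k * omega x Q.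
Proof.
move=> k0; case: (eqVneq Q [::]) => [->|hQ]; first by rewrite !omega_nil mulr0.
apply/eqP; rewrite eq_le; apply/andP; split.
  have [p pQ ->] := omega_mem (scl k x) hQ.
  by rewrite dot_scl ler_pM2l //; apply: omega_ge.
have [p pQ ->] := omega_mem x hQ.
by rewrite -dot_scl; apply: omega_ge.
Qed.

Lemma vnorm_pos p : 0 < nrm2 p -> 0 < vnorm p.
Proof. by move=> h; rewrite /vnorm sqrtr_gt0. Qed.

Lemma vnorm_sq p : vnorm p ^+ 2 = nrm2 p.
Proof. by rewrite /vnorm sqr_sqrtr // nrm2_ge0. Qed.

Definition unz (z : pt) : pt := scl (vnorm z)^-1 z.

Lemma unz_unit z : 0 < nrm2 z -> unitv (unz z).
Proof.
move=> h; have n0 := vnorm_pos h; have n2 := vnorm_sq z.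
rewrite /unitv /unz /scl /= -/(nrm2 z) in n2 *.
rewrite !exprMn -mulrDr -/(nrm2 z) -n2 -exprMn mulVf //; last by rewrite gt_eqF.
by rewrite expr1n.
Qed.

Lemma unz_scl z : 0 < nrm2 z -> scl (vnorm z) (unz z) = z.
Proof.
move=> h; have n0 := vnorm_pos h; rewrite /unz /scl /= !mulrA divff ?gt_eqF // !mul1r.
by case: z {h n0}.
Qed.

Lemma unit_nz x : unitv x -> 0 < nrm2 x.
Proof. by rewrite /unitv /nrm2 => ->. Qed.

Lemma omega_unz z (Q : seq pt) : 0 < nrm2 z -> omega z Q = vnorm z * omega (unz z) Q.
Proof. by move=> hz; rewrite -omega_scl ?vnorm_pos // unz_scl. Qed.

Lemma stand_pos (P : seq pt) z : standing P -> 0 < nrm2 z -> 0 < omega z P.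
Proof.
move=> hs hz; rewrite (omega_unz _ hz).
by apply: mulr_gt0; [apply: vnorm_pos | apply: hs; apply: unz_unit].
Qed.

Lemma regret_iff (P Q : seq pt) eps x : 0 < omega x P ->
  (regret_x P Q x <= eps) <-> ((1 - eps) * omega x P <= omega x Q).
Proof.
move=> h; rewrite /regret_x.
have -> : (1 - omega x Q / omega x P <= eps) = (1 - eps <= omega x Q / omega x P).
  by apply/idP/idP => H; lra.
by rewrite ler_pdivlMr.
Qed.

Lemma regret_pos (P Q : seq pt) eps z : standing P -> regret_set P Q eps -> 0 < nrm2 z ->
  (1 - eps) * omega z P <= omega z Q.
Proof.
move=> hs [_ hr] hz; rewrite !(omega_unz _ hz).
have u := unz_unit hz.
have := hr _ u; rewrite regret_iff; last by apply: hs.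
by move=> H; rewrite mulrCA ler_pM2l ?vnorm_pos.
Qed.

End Aux.
From mathcomp Require Import all_boot all_order all_algebra.
From mathcomp Require Import all_classical all_reals all_analysis.
From mathcomp Require Import ring lra.
Import Order.TTheory GRing.Theory Num.Theory.
Local Open Scope ring_scope.
Set Implicit Arguments. Unset Strict Implicit. Unset Printing Implicit Defensive.

Section Ang.
Variable R : realType.
Local Notation pt := (R * R)%type.

Ltac fixb := repeat match goal with H : (?a <= ?b) = false |- _ => move/negbT: H; rewrite -ltNge => H end.

Lemma u_bound (p : pt) : -1 <= p.1 / vnorm p <= 1.
Proof.
have [h|h] : nrm2 p = 0 \/ 0 < nrm2 p.
  by have := nrm2_ge0 p; rewrite le_eqVlt => /orP [/eqP ->|->]; [left|right].
  have -> : vnorm p = 0 by rewrite /vnorm -/(nrm2 p) h sqrtr0.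
  by rewrite invr0 mulr0; lra.
have v0 := vnorm_pos h; have v2 := vnorm_sq p.
have : (p.1 / vnorm p) ^+ 2 <= 1.
  rewrite expr_div_n v2 ler_pdivrMr // mul1r /nrm2.
  by have := sqr_ge0 p.2; lra.
move=> H; apply/andP; split; nra.
Qed.

Lemma pa_ge0 (p : pt) : 0 <= polar_angle p.
Proof.
have ub := u_bound p; have pg := pi_gt0 R.
rewrite /polar_angle; case: ifP => _; first exact: acos_ge0.
by have := acos_lepi ub; lra.
Qed.

Lemma pa_lt2pi (p : pt) : polar_angle p < 2 * pi.
Proof.
have ub := u_bound p; have pg := pi_gt0 R.
rewrite /polar_angle; case: ifP => h2; first by have := acos_lepi ub; lra.
fixb.
have hn : 0 < nrm2 p by rewrite /nrm2; nra.
have v0 := vnorm_pos hn; have v2 := vnorm_sq p.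
suff : 0 < acos (p.1 / vnorm p) by lra.
apply: acos_gt0; case/andP: ub => -> /= ub1.
rewrite lt_neqAle ub1 andbT; apply/eqP => e.
have e1 : p.1 = vnorm p.
  by move/(congr1 (fun x => x * vnorm p)): e; rewrite divfK ?lt0r_neq0 // mul1r.
move: v2; rewrite /nrm2 -e1 => e2.
have : p.2 ^+ 2 = 0 by lra.
by move/eqP; rewrite sqrf_eq0 => /eqP e3; move: h2; rewrite e3 ltxx.
Qed.

Lemma cos_pa (p : pt) : cos (polar_angle p) = p.1 / vnorm p.
Proof.
have ub := u_bound p.
have k : cos (acos (p.1 / vnorm p)) = p.1 / vnorm p.
  by apply: acosK; rewrite in_itv /=.
rewrite /polar_angle; case: ifP => _ //.
by rewrite mulr_natl addrC cosD2pi cosN.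
Qed.

Lemma sin_pa (p : pt) : 0 < nrm2 p -> sin (polar_angle p) = p.2 / vnorm p.
Proof.
move=> hn; have ub := u_bound p.
have v0 := vnorm_pos hn; have v2 := vnorm_sq p.
have e : 1 - (p.1 / vnorm p) ^+ 2 = (p.2 / vnorm p) ^+ 2.
  rewrite !expr_div_n v2 /nrm2; field; rewrite -/(nrm2 p); exact: lt0r_neq0.
rewrite /polar_angle; case: ifP => h2.
  by rewrite sin_acos // e sqrtr_sqr ger0_norm // divr_ge0 // ltW.
fixb.
rewrite mulr_natl addrC sinD2pi sinN sin_acos // e sqrtr_sqr ltr0_norm ?opprK //.
by rewrite pmulr_llt0 // invr_gt0.
Qed.

Lemma sin_ccw (a b : pt) : 0 < nrm2 a -> 0 < nrm2 b ->
  cross a b = vnorm a * vnorm b * sin (ccw_angle a b).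
Proof.
move=> ha hb; have va := vnorm_pos ha; have vb := vnorm_pos hb.
have e : sin (polar_angle b - polar_angle a) * (vnorm a * vnorm b) = cross a b.
  rewrite sinB !cos_pa !sin_pa // /cross; field.
  by apply/andP; split; apply: lt0r_neq0.
rewrite /ccw_angle; case: ifP => _; last by rewrite mulr_natl sinD2pi mulrC.
by rewrite mulrC.
Qed.

Lemma sin_gt0_iff (t : R) : 0 <= t < 2 * pi -> (0 < sin t <-> 0 < t < pi).
Proof.
move=> /andP [t0 t1]; split; last exact: sin_gt0_pi.
move=> hs; apply/andP; split.
  rewrite lt_neqAle t0 andbT; apply/eqP => e; move: hs; by rewrite -e sin0 ltxx.
rewrite ltNge; apply/negP => tp.
have : 0 <= sin (t - pi) by apply: sin_ge0_pi; apply/andP; split; lra.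
have : sin (t - pi + pi) = - sin (t - pi) by apply: sinDpi.
rewrite subrK; lra.
Qed.

Lemma sin_ge0_iff (t : R) : 0 <= t < 2 * pi -> (0 <= sin t <-> t <= pi).
Proof.
move=> /andP [t0 t1]; split; last by move=> h; apply: sin_ge0_pi; apply/andP.
move=> hs; rewrite leNgt; apply/negP => tp.
have : 0 < sin (t - pi) by apply: sin_gt0_pi; apply/andP; split; lra.
have : sin (t - pi + pi) = - sin (t - pi) by apply: sinDpi.
rewrite subrK; lra.
Qed.

Lemma ccw_ge0 (a b : pt) : 0 <= ccw_angle a b.
Proof.
have := pa_ge0 a; have := pa_lt2pi a; have := pa_ge0 b; have := pa_lt2pi b.
rewrite /ccw_angle; case: ifP => h; fixb; lra.
Qed.

Lemma ccw_lt2pi (a b : pt) : ccw_angle a b < 2 * pi.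
Proof.
have := pa_ge0 a; have := pa_lt2pi a; have := pa_ge0 b; have := pa_lt2pi b.
rewrite /ccw_angle; case: ifP => h; fixb; lra.
Qed.

Lemma ccw_bnd (a b : pt) : 0 <= ccw_angle a b < 2 * pi.
Proof. by rewrite ccw_ge0 ccw_lt2pi. Qed.

Lemma cross_gt0_iff (a b : pt) : 0 < nrm2 a -> 0 < nrm2 b ->
  (0 < cross a b <-> 0 < ccw_angle a b < pi).
Proof.
move=> ha hb; rewrite sin_ccw // pmulr_rgt0; last by apply: mulr_gt0; apply: vnorm_pos.
exact: sin_gt0_iff (ccw_bnd a b).
Qed.

Lemma cross_ge0_iff (a b : pt) : 0 < nrm2 a -> 0 < nrm2 b ->
  (0 <= cross a b <-> ccw_angle a b <= pi).
Proof.
move=> ha hb; rewrite sin_ccw // pmulr_rge0; last by apply: mulr_gt0; apply: vnorm_pos.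
exact: sin_ge0_iff (ccw_bnd a b).
Qed.

Lemma ccw_eq0 (a b : pt) : ccw_angle a b = 0 -> polar_angle a = polar_angle b.
Proof.
have := pa_ge0 a; have := pa_lt2pi a; have := pa_ge0 b; have := pa_lt2pi b.
rewrite /ccw_angle; case: ifP => h; fixb; lra.
Qed.

Lemma ccw_sub (a b t : pt) : ccw_angle a b <= ccw_angle a t ->
  ccw_angle b t = ccw_angle a t - ccw_angle a b.
Proof.
have := pa_ge0 a; have := pa_lt2pi a; have := pa_ge0 b; have := pa_lt2pi b.
have := pa_ge0 t; have := pa_lt2pi t.
rewrite /ccw_angle; do 3 (case: ifP => ?); fixb; lra.
Qed.

Lemma ccw_inj (a b q : pt) : ccw_angle a q = ccw_angle a b -> polar_angle q = polar_angle b.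
Proof.
have := pa_ge0 a; have := pa_lt2pi a; have := pa_ge0 b; have := pa_lt2pi b.
have := pa_ge0 q; have := pa_lt2pi q.
rewrite /ccw_angle; do 2 (case: ifP => ?); fixb; lra.
Qed.

Lemma cross_anti (a b : pt) : cross b a = - cross a b.
Proof. rewrite /cross; ring. Qed.

Lemma range_cone (a b t : pt) : 0 < nrm2 a -> 0 < nrm2 b -> 0 < nrm2 t ->
  0 < cross a b -> ccw_angle a t <= ccw_angle a b ->
  0 <= cross a t /\ 0 <= cross t b.
Proof.
move=> ha hb ht hab hr.
have /andP [_ lt] := (cross_gt0_iff ha hb).1 hab.
split; first by apply/(cross_ge0_iff ha ht); lra.
apply/(cross_ge0_iff ht hb); rewrite (ccw_sub hr); have := ccw_ge0 a t; lra.
Qed.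

Lemma cone_range (a b q : pt) : 0 < nrm2 a -> 0 < nrm2 b -> 0 < nrm2 q ->
  0 < cross a b -> 0 <= cross a q -> 0 <= cross q b ->
  ccw_angle a q <= ccw_angle a b.
Proof.
move=> ha hb hq hab haq hqb.
have /andP [v0 vpi] := (cross_gt0_iff ha hb).1 hab.
have uq := (cross_ge0_iff ha hq).1 haq.
rewrite leNgt; apply/negP => hlt.
have e := ccw_sub (ltW hlt).
have hbq : cross b q <= 0 by rewrite cross_anti; lra.
have : ~ (0 < cross b q) by move=> h; lra.
have : ccw_angle b q <= pi by rewrite e; lra.
move=> h1 h2.
have : 0 <= cross b q by apply/(cross_ge0_iff hb hq).
move=> h3.
have ez : cross b q = 0 by lra.
have : ~ (0 < ccw_angle b q < pi) by move=> /(cross_gt0_iff hb hq); lra.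
move=> h4.
have hp : ccw_angle b q = pi.
  apply/eqP; rewrite eq_le h1 /=; rewrite leNgt; apply/negP => h5; apply: h4.
  by rewrite h5 andbT e; lra.
lra.
Qed.

End Ang.
From mathcomp Require Import all_boot all_order all_algebra.
From mathcomp Require Import all_classical all_reals all_analysis.
From mathcomp Require Import ring lra.
Import Order.TTheory GRing.Theory Num.Theory.
Local Open Scope ring_scope.
Set Implicit Arguments. Unset Strict Implicit. Unset Printing Implicit Defensive.

Section P1.
Variable R : realType.
Local Notation pt := (R * R)%type.

Lemma extreme_nz (P : seq pt) t : standing P -> extreme P t -> 0 < nrm2 t.
Proof.
move=> hs [_ [x [xn hx]]]; apply: (@nz_of_dot _ t x).
have := stand_pos hs (neq0_nz xn); lra.
Qed.

Lemma cand_nz (P : seq pt) eps p : standing P -> eps < 1 -> candidate P eps p -> 0 < nrm2 p.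
Proof.
move=> hs he [_ [hx|[t [t' [x [_ [_ _ tx] h]]]]]]; first exact: extreme_nz hx.
apply: (@nz_of_dot _ p x); have : 0 < (1 - eps) * dot t x by apply: mulr_gt0; lra.
lra.
Qed.

Lemma extreme_cand (P : seq pt) eps p : extreme P p -> candidate P eps p.
Proof. by move=> h; split; [case: h | left]. Qed.

Lemma cand_in (P : seq pt) eps p : candidate P eps p -> p \in P.
Proof. by case. Qed.

Lemma max_extreme (P : seq pt) y : standing P -> 0 < nrm2 y ->
  exists t, [/\ extreme P t, t \in P & omega y P = dot t y].
Proof.
move=> hs hy; have hp := stand_pos hs hy.
have hP : P != [::] by apply/eqP => e; move: hp; rewrite e omega_nil ltxx.
have [t tP e] := omega_mem y hP.
exists t; split => //; split => //; exists y; split; first exact: nz_neq0.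
by rewrite e.
Qed.

Lemma ccw_pos_cand (P : seq pt) eps a b : distinct_angles P eps ->
  candidate P eps a -> candidate P eps b -> a != b -> 0 < ccw_angle a b.
Proof.
move=> hd ca cb ab; rewrite lt_neqAle ccw_ge0 andbT; apply/eqP => /esym /ccw_eq0 e.
by have := hd _ _ ca cb ab; rewrite e eqxx.
Qed.

Lemma cone_id1 (a b t : pt) : cross a b * t.1 = cross t b * a.1 + cross a t * b.1.
Proof. rewrite /cross; ring. Qed.
Lemma cone_id2 (a b t : pt) : cross a b * t.2 = cross t b * a.2 + cross a t * b.2.
Proof. rewrite /cross; ring. Qed.
Lemma cone_dot (a b t x : pt) : cross a b * dot t x = cross t b * dot a x + cross a t * dot b x.
Proof. rewrite /cross /dot; ring. Qed.
Lemma perp_id (a b x : pt) : nrm2 x * cross a b = dot a x * cross x b - dot b x * cross x a.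
Proof. rewrite /cross /dot /nrm2; ring. Qed.

Lemma cone_S (a b t : pt) : 0 < cross a b -> 0 < nrm2 t ->
  0 <= cross t b -> 0 <= cross a t -> 0 < cross t b + cross a t.
Proof.
move=> C ht c1 c2; rewrite lt_neqAle addr_ge0 // andbT; apply/eqP => e.
have e1 : cross t b = 0 by lra.
have e2 : cross a t = 0 by lra.
have := cone_id1 a b t; have := cone_id2 a b t; rewrite e1 e2 !mul0r addr0 => h2 h1.
have t1 : t.1 = 0 by move/eqP: h1; rewrite mulf_eq0 gt_eqF //= => /eqP.
have t2 : t.2 = 0 by move/eqP: h2; rewrite mulf_eq0 gt_eqF //= => /eqP.
by move: ht; rewrite /nrm2 t1 t2 expr0n /= addr0 ltxx.
Qed.

Lemma edge_cover (P : seq pt) eps a b t y W : standing P -> 0 < eps < 1 -> distinct_angles P eps ->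
  edge P eps a b -> extreme P t -> ccw_angle a t <= ccw_angle a b ->
  0 < dot t y -> dot a y <= W -> dot b y <= W -> (1 - eps) * dot t y <= W.
Proof.
move=> hs /andP [e0 e1] hd [ca cb ab lt [x [xu eab a0 lij]]] et rng ty hay hby.
have ha := cand_nz hs e1 ca; have hb := cand_nz hs e1 cb; have ht := extreme_nz hs et.
have C : 0 < cross a b by apply/(cross_gt0_iff ha hb); rewrite lt (ccw_pos_cand hd ca cb ab).
have [c1 c2] := range_cone ha hb ht C rng.
have ax : 0 < dot a x.
  rewrite lt_neqAle a0 andbT; apply/eqP => e.
  have := perp_id a b x; rewrite -eab -e !mul0r subr0.
  have -> : nrm2 x = 1 by move: xu; rewrite /unitv /nrm2.
  lra.
have S := cone_S C ht c2 c1.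
have tx : cross a b * dot t x = (cross t b + cross a t) * dot a x.
  by rewrite cone_dot -eab; ring.
have txp : 0 < dot t x.
  have : 0 < cross a b * dot t x by rewrite tx; apply: mulr_gt0.
  by rewrite pmulr_rgt0.
have hl : 1 - dot a x / dot t x <= eps.
  apply: le_trans lij; apply: maxseq_ge; apply: map_f.
  rewrite mem_filter mem_undup; apply/andP; split; last by case: et.
  by apply: asboolT; split.
have hA : (1 - eps) * dot t x <= dot a x.
  have : 1 - eps <= dot a x / dot t x by lra.
  by rewrite ler_pdivlMr.
have hC : (1 - eps) * (cross t b + cross a t) <= cross a b.
  have : (1 - eps) * (cross t b + cross a t) * dot a x <= cross a b * dot a x.
    have : (1 - eps) * (cross a b * dot t x) <= cross a b * dot a x.
      by rewrite mulrCA ler_pM2l.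
    by rewrite tx mulrA.
  by rewrite ler_pM2r.
have ty2 : cross a b * dot t y <= (cross t b + cross a t) * W.
  rewrite cone_dot [X in _ <= X]mulrDl; apply: lerD; apply: ler_wpM2l => //.
have W0 : 0 <= W.
  rewrite leNgt; apply/negP => Wn.
  have : (cross t b + cross a t) * W < 0 by rewrite pmulr_rlt0.
  have : 0 < cross a b * dot t y by apply: mulr_gt0.
  lra.
have : cross a b * ((1 - eps) * dot t y) <= cross a b * W.
  rewrite mulrCA; apply: (le_trans (ler_wpM2l _ ty2)); first lra.
  rewrite mulrA; apply: ler_wpM2r => //.
by rewrite ler_pM2l.
Qed.

Lemma cover (f : nat -> pt) n t : (0 < n)%N ->
  (forall i, (i < n)%N -> 0 < ccw_angle (f i) (f (i.+1 %% n)%N)) ->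
  exists2 i, (i < n)%N & ccw_angle (f i) t <= ccw_angle (f i) (f (i.+1 %% n)%N).
Proof.
move=> n0 hpos.
case: (pselect (exists2 i, (i < n)%N & ccw_angle (f i) t <= ccw_angle (f i) (f (i.+1 %% n)%N))) => // hno.
exfalso.
have H : forall i, (i < n)%N -> ccw_angle (f i) (f (i.+1 %% n)%N) < ccw_angle (f i) t.
  move=> i hi; rewrite ltNge; apply/negP => h; apply: hno; by exists i.
have E : forall i, (i < n)%N -> ccw_angle (f (i.+1 %% n)%N) t < ccw_angle (f i) t.
  move=> i hi; rewrite (ccw_sub (ltW (H i hi))); have := hpos i hi; lra.
have K : forall k, (0 < k)%N -> (k <= n)%N -> ccw_angle (f (k %% n)%N) t < ccw_angle (f 0%N) t.
  elim => [//|k IH] _ hk.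
  case: k IH hk => [|k] IH hk; first exact: (E 0%N n0).
  have hk1 : (k.+1 < n)%N by [].
  apply: lt_trans (E _ hk1) _.
  by have := IH isT (ltnW hk1); rewrite modn_small.
by have := K n n0 (leqnn n); rewrite modnn ltxx.
Qed.

Lemma part1 (P : seq pt) eps c : standing P -> 0 < eps < 1 -> distinct_angles P eps ->
  dcycle P eps c -> regret_set P c eps.
Proof.
move=> hs he hd [cne cu ced].
have n0 : (0 < size c)%N by case: c cne cu ced.
split.
  move=> x xc; have hi : (index x c < size c)%N by rewrite index_mem.
  have [ca _ _ _ _] := ced _ hi; by move: ca; rewrite nth_index // => /cand_in.
move=> y yu; have hy := unit_nz yu.
rewrite regret_iff; last exact: stand_pos.
have [t [et tP ey]] := max_extreme hs hy.
have hpos : forall i, (i < size c)%N -> 0 < ccw_angle (nth 0 c i) (nth 0 c (i.+1 %% size c)).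
  by move=> i hi; have [ca cb ab _ _] := ced _ hi; apply: ccw_pos_cand hd ca cb ab.
have [i hi hr] := cover (f := nth 0 c) t n0 hpos.
rewrite ey; apply: (edge_cover hs he hd (ced _ hi) et hr).
- by rewrite -ey; apply: stand_pos.
- by apply: omega_ge; apply: mem_nth.
- by apply: omega_ge; apply: mem_nth; rewrite ltn_mod.
Qed.

End P1.
From mathcomp Require Import all_boot all_order all_algebra.
From mathcomp Require Import all_classical all_reals all_analysis.
From mathcomp Require Import ring lra.
Import Order.TTheory GRing.Theory Num.Theory.
Local Open Scope ring_scope.
Set Implicit Arguments. Unset Strict Implicit. Unset Printing Implicit Defensive.

Section P2.
Variable R : realType.
Local Notation pt := (R * R)%type.

Definition nrmlz (a b : pt) : pt := unz (b.2 - a.2, a.1 - b.1).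

Lemma nrmlz_props (a b : pt) : 0 < cross a b ->
  [/\ unitv (nrmlz a b), dot a (nrmlz a b) = dot b (nrmlz a b),
      0 < dot a (nrmlz a b) &
      exists2 k, 0 < k & forall y, cross (nrmlz a b) y = k * (dot b y - dot a y)].
Proof.
move=> C; set w : pt := (b.2 - a.2, a.1 - b.1).
have dw : dot w a = cross a b by rewrite /dot /cross /=; ring.
have hw : 0 < nrm2 w by apply: (@nz_of_dot _ w a); rewrite dw gt_eqF.
have vw := vnorm_pos hw.
have da : dot a (nrmlz a b) = (vnorm w)^-1 * cross a b.
  by rewrite /nrmlz /unz dot_scl -/w -dw /dot; congr (_ * _); ring.
have db : dot b (nrmlz a b) = (vnorm w)^-1 * cross a b.
  by rewrite /nrmlz /unz dot_scl -/w /dot /cross /=; congr (_ * _); ring.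
split.
- exact: unz_unit.
- by rewrite da db.
- by rewrite da; apply: mulr_gt0 => //; rewrite invr_gt0.
- exists (vnorm w)^-1; first by rewrite invr_gt0.
  by move=> y; rewrite /nrmlz /unz /scl /cross /dot /=; ring.
Qed.

Lemma seq_argmin (s : seq pt) (f : pt -> R) : s != [::] ->
  exists2 m, m \in s & forall v, v \in s -> f m <= f v.
Proof.
elim: s => [//|x s IH] _.
case: (eqVneq s [::]) => [->|hs].
  by exists x; rewrite ?mem_head // => v; rewrite inE => /eqP ->.
have [m ms hm] := IH hs.
case: (lerP (f x) (f m)) => h.
  exists x; first by rewrite mem_head.
  move=> v; rewrite inE => /orP [/eqP ->//|vs]; exact: le_trans h (hm v vs).
exists m; first by rewrite inE ms orbT.
move=> v; rewrite inE => /orP [/eqP ->|vs]; [exact: ltW | exact: hm].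
Qed.

Lemma redundant (P Q : seq pt) eps r u v K l m : standing P -> eps < 1 ->
  regret_set P Q eps -> u \in Q -> v \in Q -> u != r -> v != r ->
  0 < K -> 0 <= l -> 0 <= m -> l + m <= K ->
  (forall y, K * dot r y = l * dot u y + m * dot v y) ->
  regret_set P [seq p <- Q | p != r] eps.
Proof.
move=> hs he hQ uQ vQ ur vr K0 l0 m0 lm hK.
split.
  by move=> p; rewrite mem_filter => /andP [_ pQ]; apply: hQ.1.
move=> y yu; have hy := unit_nz yu; rewrite regret_iff; last exact: stand_pos.
have hr := regret_pos hs hQ hy.
have hp := stand_pos hs hy.
have Qn : Q != [::] by case: Q uQ {hQ vQ hK hr}.
have [p pQ ep] := omega_mem y Qn.
apply: (le_trans hr); rewrite ep.
case: (eqVneq p r) => [epr|npr]; last first.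
  by apply: omega_ge; rewrite mem_filter npr.
rewrite epr; set W := omega y _.
have uW : dot u y <= W by apply: omega_ge; rewrite mem_filter ur.
have vW : dot v y <= W by apply: omega_ge; rewrite mem_filter vr.
have ry : 0 < dot r y.
  have : 0 < (1 - eps) * omega y P by apply: mulr_gt0; lra.
  by rewrite -epr -ep; lra.
have h1 : K * dot r y <= (l + m) * W.
  by rewrite hK mulrDl; apply: lerD; apply: ler_wpM2l.
have W0 : 0 <= W.
  rewrite leNgt; apply/negP => Wn.
  have : (l + m) * W <= 0 by rewrite mulr_ge0_le0 //; [lra | lra].
  have : 0 < K * dot r y by apply: mulr_gt0.
  lra.
have : K * dot r y <= K * W by apply: (le_trans h1); apply: ler_wpM2r.
by rewrite ler_pM2l.
Qed.

Lemma final_alg (s1 s2 sy r1 r2 ry A B : R) : 0 < s1 -> 0 < s2 -> 0 < sy ->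
  s1 * A + r1 * B < 0 -> s2 * A + r2 * B < 0 -> 0 <= sy * A + ry * B ->
  s1 * ry - sy * r1 <= 0 -> 0 <= s2 * ry - sy * r2 -> False.
Proof.
move=> h1 h2 hy a1 a2 ay c1 c2.
case: (lerP 0 B) => hB.
  have e1 : 0 <= s1 * (sy * A + ry * B) by apply: mulr_ge0; lra.
  have e2 : B * (s1 * ry - sy * r1) <= 0 by apply: mulr_ge0_le0.
  have e3 : sy * (s1 * A + r1 * B) < 0 by rewrite pmulr_rlt0.
  nra.
have e1 : 0 <= s2 * (sy * A + ry * B) by apply: mulr_ge0; lra.
have e2 : B * (s2 * ry - sy * r2) <= 0 by apply: mulr_le0_ge0 => //; lra.
have e3 : sy * (s2 * A + r2 * B) < 0 by rewrite pmulr_rlt0.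
nra.
Qed.

End P2.
From mathcomp Require Import all_boot all_order all_algebra.
From mathcomp Require Import all_classical all_reals all_analysis.
From mathcomp Require Import ring lra.
Import Order.TTheory GRing.Theory Num.Theory.
Local Open Scope ring_scope.
Set Implicit Arguments. Unset Strict Implicit. Unset Printing Implicit Defensive.

Section P3.
Variable R : realType.
Local Notation pt := (R * R)%type.

Lemma cand_of_min (P Q : seq pt) eps q : standing P -> 0 < eps < 1 -> distinct_angles P eps ->
  locally_minimal P Q eps -> q \in Q -> candidate P eps q.
Proof.
move=> hs /andP [e0 e1] hd [hQ hmin] qQ.
have qP : q \in P by apply: hQ.1.
case: (pselect (candidate P eps q)) => // hnc; exfalso.
set Q' := [seq p <- Q | p != q].
have [y [yu hy]] : exists y, unitv y /\ omega y Q' < (1 - eps) * omega y P.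
  case: (pselect (exists y, unitv y /\ omega y Q' < (1 - eps) * omega y P)) => // hno.
  exfalso; apply: (hmin q qQ); split.
    by move=> p; rewrite mem_filter => /andP [_ pQ]; apply: hQ.1.
  move=> y yu; rewrite regret_iff; last by apply: stand_pos => //; apply: unit_nz.
  rewrite leNgt; apply/negP => h; apply: hno; by exists y.
have hyn := unit_nz yu.
have hq : (1 - eps) * omega y P <= dot q y.
  have h := regret_pos hs hQ hyn.
  have Qn : Q != [::] by case: Q qQ {hQ hmin Q' hy h}.
  have [p pQ ep] := omega_mem y Qn.
  case: (eqVneq p q) => [epq|npq]; first by rewrite -epq -ep.
  have : dot p y <= omega y Q' by apply: omega_ge; rewrite mem_filter npq.
  lra.
have [t [et tP ey]] := max_extreme hs hyn.
have ht := extreme_nz hs et.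
set E := [seq u <- P | `[< extreme P u >] && (u != t)].
have inE' : forall u, extreme P u -> u != t -> u \in E.
  move=> u eu ut; rewrite mem_filter ut andbT; apply/andP; split; first exact: asboolT.
  by case: eu.
have ofE : forall u, u \in E -> extreme P u /\ u != t.
  by move=> u; rewrite mem_filter => /andP [/andP [/asboolP ? ?] _].
set z : pt := (- t.2, t.1).
have hz : 0 < nrm2 z by rewrite /nrm2 /= sqrrN addrC.
have [u [eu uP ez]] := max_extreme hs hz.
have cu : 0 < cross t u.
  have := stand_pos hs hz; rewrite ez /dot /cross /=; lra.
have ut : u != t by apply/eqP => e; move: cu; rewrite e /cross; lra.
have En : E != [::] by apply/eqP => e; have := inE' u eu ut; rewrite e.
have [t' t'E ht'] := seq_argmin (ccw_angle t) En.
have [et' t't] := ofE _ t'E.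
have hcons1 : consecutive P t t'.
  split => //; first by rewrite eq_sym.
  by move=> v ev vt; apply: ht'; apply: inE'.
have ht'n := extreme_nz hs et'.
have C1 : 0 < cross t t'.
  apply/(cross_gt0_iff ht ht'n); apply/andP; split.
    by apply: ccw_pos_cand hd (extreme_cand eps et) (extreme_cand eps et') _; rewrite eq_sym.
  apply: le_lt_trans (ht' u (inE' u eu ut)) _.
  by have /andP [] := (cross_gt0_iff ht (extreme_nz hs eu)).1 cu.
have [x1u x1e x1p [k1 k1p k1c]] := nrmlz_props C1.
set x1 := nrmlz t t' in x1u x1e x1p k1c.
have hq1 : dot q x1 < (1 - eps) * dot t x1.
  rewrite ltNge; apply/negP => h; apply: hnc; split => //; right.
  by exists t, t', x1; split.
set z2 : pt := (t.2, - t.1).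
have hz2 : 0 < nrm2 z2 by rewrite /nrm2 /= sqrrN addrC.
have [u2 [eu2 u2P ez2]] := max_extreme hs hz2.
have cu2 : 0 < cross u2 t.
  have := stand_pos hs hz2; rewrite ez2 /dot /cross /=; lra.
have u2t : u2 != t by apply/eqP => e; move: cu2; rewrite e /cross; lra.
have [t'' t''E ht''] := seq_argmin (fun v => ccw_angle v t) En.
have [et'' t''t] := ofE _ t''E.
have ht''n := extreme_nz hs et''.
have hcons2 : consecutive P t'' t.
  split => //.
  move=> v ev vt''; case: (eqVneq v t) => [->|vt]; first exact: lexx.
  rewrite leNgt; apply/negP => hlt.
  have e := ccw_sub (ltW hlt).
  have := ht'' v (inE' v ev vt).
  have vt2 : t'' != v by rewrite eq_sym.
  have := ccw_pos_cand hd (extreme_cand eps et'') (extreme_cand eps ev) vt2.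
  lra.
have C2 : 0 < cross t'' t.
  apply/(cross_gt0_iff ht''n ht); apply/andP; split.
    by apply: ccw_pos_cand hd (extreme_cand eps et'') (extreme_cand eps et) _.
  apply: le_lt_trans (ht'' u2 (inE' u2 eu2 u2t)) _.
  by have /andP [] := (cross_gt0_iff (extreme_nz hs eu2) ht).1 cu2.
have [x2u x2e x2p [k2 k2p k2c]] := nrmlz_props C2.
set x2 := nrmlz t'' t in x2u x2e x2p k2c.
have hq2 : dot q x2 < (1 - eps) * dot t'' x2.
  rewrite ltNge; apply/negP => h; apply: hnc; split => //; right.
  by exists t'', t, x2; split.
rewrite x2e in hq2 x2p.
have ty : 0 < dot t y by rewrite -ey; apply: stand_pos.
have t'y : dot t' y <= dot t y by rewrite -ey; apply: omega_ge; case: et'.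
have t''y : dot t'' y <= dot t y by rewrite -ey; apply: omega_ge; case: et''.
have cx1 : cross x1 y <= 0 by rewrite k1c; apply: mulr_ge0_le0; lra.
have cx2 : 0 <= cross x2 y by rewrite k2c; apply: mulr_ge0; lra.
set A := dot q t - (1 - eps) * nrm2 t.
set B := cross t q.
have I : forall w, nrm2 t * (dot q w - (1 - eps) * dot t w) = dot t w * A + cross t w * B.
  by move=> w; rewrite /A /B /nrm2 /dot /cross; ring.
have J : forall v w, nrm2 t * cross v w = dot t v * cross t w - dot t w * cross t v.
  by move=> v w; rewrite /nrm2 /dot /cross; ring.
apply: (final_alg (s1:=dot t x1) (s2:=dot t x2) (sy:=dot t y) (r1:=cross t x1) (r2:=cross t x2) (ry:=cross t y) (A:=A) (B:=B)) => //.
- by rewrite -I pmulr_rlt0 //; lra.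
- by rewrite -I pmulr_rlt0 //; lra.
- rewrite -I ey in hq *; apply: mulr_ge0; [exact: ltW | lra].
- rewrite -J; apply: mulr_ge0_le0 => //; exact: ltW.
- rewrite -J; apply: mulr_ge0 => //; exact: ltW.
Qed.

End P3.
From mathcomp Require Import all_boot all_order all_algebra.
From mathcomp Require Import all_classical all_reals all_analysis.
From mathcomp Require Import ring lra.
Import Order.TTheory GRing.Theory Num.Theory.
Local Open Scope ring_scope.
Set Implicit Arguments. Unset Strict Implicit. Unset Printing Implicit Defensive.

Section P4.
Variable R : realType.
Local Notation pt := (R * R)%type.

Lemma edge_lij (P Q : seq pt) eps a b t : standing P -> 0 < eps < 1 -> distinct_angles P eps ->
  locally_minimal P Q eps -> (forall q, q \in Q -> candidate P eps q) ->
  a \in Q -> b \in Q -> a != b -> 0 < cross a b ->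
  (forall q, q \in Q -> q != a -> ccw_angle a b <= ccw_angle a q) ->
  extreme P t -> ccw_angle a t <= ccw_angle a b ->
  1 - dot a (nrmlz a b) / dot t (nrmlz a b) <= eps.
Proof.
move=> hs /andP [e0 e1] hd [hQ hmin] hc aQ bQ ab C hsucc et rng.
have [xu xe xp _] := nrmlz_props C.
set x := nrmlz a b in xu xe xp *.
have ha := cand_nz hs e1 (hc _ aQ); have hb := cand_nz hs e1 (hc _ bQ).
have ht := extreme_nz hs et.
have [c1 c2] := range_cone ha hb ht C rng.
have S := cone_S C ht c2 c1.
have tx : cross a b * dot t x = (cross t b + cross a t) * dot a x.
  by rewrite cone_dot -xe; ring.
have txp : 0 < dot t x.
  have : 0 < cross a b * dot t x by rewrite tx; apply: mulr_gt0.
  by rewrite pmulr_rgt0.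
suff hA : (1 - eps) * dot t x <= dot a x.
  have : 1 - eps <= dot a x / dot t x by rewrite ler_pdivlMr.
  lra.
have hx := unit_nz xu.
have hr := regret_pos hs hQ hx.
have tP : dot t x <= omega x P by apply: omega_ge; case: et.
have Qn : Q != [::] by apply/eqP => e; move: aQ; rewrite e.
have [q qQ eq] := omega_mem x Qn.
case: (lerP (dot q x) (dot a x)) => hqa.
  apply: le_trans hqa; rewrite -eq; apply: le_trans hr; apply: ler_wpM2l => //; lra.
exfalso.
have cq : cross a b * dot q x = (cross q b + cross a q) * dot a x.
  by rewrite cone_dot -xe; ring.
have Cs : cross a b < cross q b + cross a q.
  have : cross a b * dot a x < cross a b * dot q x by rewrite ltr_pM2l.
  rewrite cq ltr_pM2r //.
have qa : q != a by apply/eqP => e; move: hqa; rewrite e ltxx.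
have qb : q != b by apply/eqP => e; move: hqa; rewrite e xe ltxx.
case: (lerP 0 (cross q b)) => hqb; case: (lerP 0 (cross a q)) => haq.
- have hq : 0 < nrm2 q by apply: (@nz_of_dot _ q x); rewrite gt_eqF //; lra.
  have r1 := cone_range ha hb hq C haq hqb.
  have r2 := hsucc q qQ qa.
  have : polar_angle q = polar_angle b by apply: (ccw_inj (a:=a)); apply/eqP; rewrite eq_le r1 r2.
  by move/eqP; apply/negP; apply: hd => //; apply: hc.
-
  apply: (hmin a aQ).
  apply: (redundant (u := q) (v := b) (K := cross q b) (l := cross a b) (m := - cross a q)) => //.
  + by rewrite eq_sym.
  + lra.
  + exact: ltW.
  + lra.
  + lra.
  + by move=> y; have := cone_dot a b q y; lra.
-
  apply: (hmin b bQ).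
  apply: (redundant (u := q) (v := a) (K := cross a q) (l := cross a b) (m := - cross q b)) => //.
  + lra.
  + exact: ltW.
  + lra.
  + lra.
  + by move=> y; have := cone_dot a b q y; lra.
- lra.
Qed.

End P4.
From mathcomp Require Import all_boot all_order all_algebra.
From mathcomp Require Import all_classical all_reals all_analysis.
From mathcomp Require Import ring lra.
Import Order.TTheory GRing.Theory Num.Theory.
Local Open Scope ring_scope.
Set Implicit Arguments. Unset Strict Implicit. Unset Printing Implicit Defensive.

Section P5.
Variable R : realType.
Local Notation pt := (R * R)%type.

Ltac fixb := repeat match goal with H : (?a <= ?b) = false |- _ => move/negbT: H; rewrite -ltNge => H end.

Lemma part2 (P Q : seq pt) eps : standing P -> 0 < eps < 1 -> distinct_angles P eps ->
  locally_minimal P Q eps -> exists c, dcycle P eps c /\ c =i Q.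
Proof.
move=> hs he hd hmin; have [hQ _] := hmin; have /andP [e0 e1] := he.
have hc : forall q, q \in Q -> candidate P eps q by move=> q; apply: cand_of_min.
pose lepa := [rel p q : pt | polar_angle p <= polar_angle q].
pose c := sort lepa (undup Q).
have cQ : c =i Q by move=> x; rewrite mem_sort mem_undup.
have cu : uniq c by rewrite sort_uniq undup_uniq.
have cs : sorted lepa c by apply: sort_sorted => p q; apply: le_total.
have cc : forall i, (i < size c)%N -> candidate P eps (nth 0 c i).
  by move=> i hi; apply: hc; rewrite -cQ mem_nth.
have mle : forall i j, (i <= j)%N -> (j < size c)%N ->
    polar_angle (nth 0 c i) <= polar_angle (nth 0 c j).
  move=> i j hij hj.
  have tr : transitive lepa by move=> y x z h1 h2; apply: le_trans h1 h2.
  by apply: (sorted_leq_nth tr (fun x => lexx _) 0 cs) => //; rewrite inE; apply: leq_ltn_trans hj.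
have mlt : forall i j, (i < j)%N -> (j < size c)%N ->
    polar_angle (nth 0 c i) < polar_angle (nth 0 c j).
  move=> i j hij hj; have hi : (i < size c)%N by apply: ltn_trans hj.
  rewrite lt_neqAle mle ?(ltnW hij) // andbT.
  apply: hd; [exact: cc | exact: cc |].
  by rewrite nth_uniq // neq_ltn hij.
have nz : forall a, a \in Q -> exists2 p, p \in Q & 0 < cross a p.
  move=> a aQ; have ha := cand_nz hs e1 (hc _ aQ).
  pose z : pt := (- a.2, a.1).
  have hz : 0 < nrm2 z by rewrite /nrm2 /= sqrrN addrC.
  have h := regret_pos hs hQ hz.
  have Qn : Q != [::] by apply/eqP => e; move: aQ; rewrite e.
  have [p pQ ep] := omega_mem z Qn.
  exists p => //; have hp := stand_pos hs hz.
  have : 0 < omega z Q by apply: lt_le_trans h; apply: mulr_gt0 => //; lra.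
  by rewrite ep /dot /cross /=; lra.
have [a0 a0Q] : exists a, a \in Q.
  pose z : pt := (1, 0).
  have hz : 0 < nrm2 z by rewrite /nrm2 /= expr1n expr0n /= addr0 ltr01.
  have h := regret_pos hs hQ hz.
  have hp := stand_pos hs hz.
  case: (Q) h => [|a l] h; last by exists a; rewrite mem_head.
  exfalso; move: h; rewrite omega_nil; have : 0 < (1 - eps) * omega z P.
    by apply: mulr_gt0 => //; lra.
  lra.
have n2 : (1 < size c)%N.
  have [p pQ cp] := nz a0 a0Q.
  have pa : p != a0 by apply/eqP => e; move: cp; rewrite e /cross; lra.
  move: (cQ a0) (cQ p) pa; rewrite a0Q pQ; case: (c) => [|x [|y l]] //.
  by rewrite !inE => /eqP -> /eqP ->; rewrite eqxx.
have n0 : (0 < size c)%N by apply: ltn_trans n2.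
have pab := fun k => pa_ge0 (nth 0 c k).
have pbb := fun k => pa_lt2pi (nth 0 c k).
have succ : forall i, (i < size c)%N -> forall q, q \in c -> q != nth 0 c i ->
    ccw_angle (nth 0 c i) (nth 0 c (i.+1 %% size c)) <= ccw_angle (nth 0 c i) q.
  move=> i hi q qc qi.
  have hj : (index q c < size c)%N by rewrite index_mem.
  have ji : index q c != i by apply: contraNneq qi => <-; rewrite nth_index.
  rewrite -(nth_index 0 qc); move: (index q c) hj ji => j hj ji.
  have := pab i; have := pbb i; have := pab j; have := pbb j.
  case: (ltnP i.+1 (size c)) => hi1.
    rewrite modn_small //.
    have := pab i.+1; have := pbb i.+1.
    have := mlt _ _ (ltnSn i) hi1.
    case: (ltngtP i j) => hij; last by rewrite hij eqxx in ji.
      have := mle _ _ hij hj.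
      rewrite /ccw_angle; do 2 (case: ifP => ?); fixb; lra.
    have := mlt _ _ hij hi.
    rewrite /ccw_angle; do 2 (case: ifP => ?); fixb; lra.
  have ein : i.+1 = size c by apply/eqP; rewrite eqn_leq hi hi1.
  rewrite ein modnn.
  have hji : (j < i)%N by rewrite ltn_neqAle ji /= -ltnS ein.
  have := pab 0%N; have := pbb 0%N.
  have := mle _ _ (leq0n j) hj.
  have := mlt _ _ hji hi.
  rewrite /ccw_angle; do 2 (case: ifP => ?); fixb; lra.
exists c; split => //; split => //.
  by case: (c) n2.
move=> i hi.
set a := nth 0 c i; set b := nth 0 c (i.+1 %% size c).
have hi' : (i.+1 %% size c < size c)%N by rewrite ltn_pmod.
have aQ : a \in Q by rewrite -cQ mem_nth.
have bQ : b \in Q by rewrite -cQ mem_nth.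
have ab : a != b.
  rewrite /a /b nth_uniq //.
  case: (ltnP i.+1 (size c)) => hi1; first by rewrite modn_small // neq_ltn ltnSn.
  have ein : i.+1 = size c by apply/eqP; rewrite eqn_leq hi hi1.
  rewrite ein modnn; apply/eqP => e; move: n2; rewrite -ein e.
  by [].
have ha := cand_nz hs e1 (hc _ aQ); have hb := cand_nz hs e1 (hc _ bQ).
have hlt : ccw_angle a b < pi.
  have [p pQ cp] := nz a aQ.
  have pa : p != a by apply/eqP => e; move: cp; rewrite e /cross; lra.
  apply: le_lt_trans (succ i hi p _ pa) _; first by rewrite cQ.
  have hp := cand_nz hs e1 (hc _ pQ).
  by have /andP [] := (cross_gt0_iff ha hp).1 cp.
have C : 0 < cross a b.
  by apply/(cross_gt0_iff ha hb); rewrite hlt (ccw_pos_cand hd (hc _ aQ) (hc _ bQ) ab).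
have [xu xe xp _] := nrmlz_props C.
split => //; try by apply: hc.
exists (nrmlz a b); split => //; first exact: ltW.
apply: maxseq_le; last exact: ltW.
move=> v /mapP [t]; rewrite mem_filter => /andP [/asboolP [et rng] _] ->.
apply: (edge_lij hs he hd hmin hc aQ bQ ab C) => //.
by move=> q qQ qa; apply: succ => //; rewrite cQ.
Qed.

End P5.

Theorem lemma3 (R : realType) (P : seq (R * R)) (eps : R) :
  standing P -> 0 < eps < 1 -> distinct_angles P eps ->
  (forall c, dcycle P eps c -> regret_set P c eps) /\
  (forall Q, locally_minimal P Q eps ->
     exists c, dcycle P eps c /\ c =i Q).
Proof.
move=> hs he hd; split.
  by move=> c; apply: part1.
by move=> Q; apply: part2.
Qed.
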